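(* Let $p\in(0,1/16)$. Then for any $m,n\in\mathbb N$ the set $$\Delta_{mn}(p)=\{q\in(0,1/16):\ S_1^m(A_{pq})\cap S_2^n(A_{pq})\neq\varnothing\}$$ is closed and nowhere dense in $(0,1/16)$.
   Context: For $p,q\in(0,1/2)$ let $S_1(x)=px$, $S_2(x)=qx$, $S_3(x)=px+1-p$, $S_4(x)=qx+1-q$, let $K_{pq}$ be the attractor of $\{S_1,S_2,S_3,S_4\}$ (the unique nonempty compact $K\subset\mathbb R$ with $K=\bigcup_{i=1}^4S_i(K)$), and let $A_{pq}=S_3(K_{pq})\cup S_4(K_{pq})$. In the definition of $\Delta_{mn}(p)$ the maps $S_2,S_3,S_4$ and the set $A_{pq}$ are those corresponding to the parameters $p,q$. *)

(* Defs.v *)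
From HB Require Import structures.
From mathcomp Require Import all_boot all_order all_algebra.
From mathcomp Require Import all_classical all_reals topology normedtype.
Set Implicit Arguments. Unset Strict Implicit. Unset Printing Implicit Defensive.
Import Order.TTheory GRing.Theory Num.Theory numFieldTopology.Exports numFieldNormedType.Exports.
Local Open Scope classical_set_scope.
Local Open Scope ring_scope.

Section IFS.
Variable R : realType.

Definition S1 (p q : R) (x : R) : R := p * x.
Definition S2 (p q : R) (x : R) : R := q * x.
Definition S3 (p q : R) (x : R) : R := p * x + 1 - p.
Definition S4 (p q : R) (x : R) : R := q * x + 1 - q.

Definition is_attractor (p q : R) (K : set R) : Prop :=
  K !=set0 /\ compact K /\
  K = (S1 p q @` K) `|` (S2 p q @` K) `|` (S3 p q @` K) `|` (S4 p q @` K).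

Definition Kpq (p q : R) : set R := xget set0 (is_attractor p q).

Definition Apq (p q : R) : set R := (S3 p q @` Kpq p q) `|` (S4 p q @` Kpq p q).

Definition Delta (m n : nat) (p : R) : set R :=
  [set q | 0 < q < 1/16 /\
     ((iter m (S1 p q)) @` Apq p q) `&` ((iter n (S2 p q)) @` Apq p q) !=set0].

End IFS.

(* Main.v *)
Require Import Defs.
From HB Require Import structures.
From mathcomp Require Import all_boot all_order all_algebra.
From mathcomp Require Import all_classical all_reals topology normedtype.
From mathcomp Require Import sequences ring lra zify.
Set Implicit Arguments. Unset Strict Implicit. Unset Printing Implicit Defensive.
Import Order.TTheory GRing.Theory Num.Theory numFieldTopology.Exports numFieldNormedType.Exports.
Local Open Scope classical_set_scope.
Local Open Scope ring_scope.
Definition Sd (R : realType) (p q : R) (d : nat) (x : R) : R :=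
  match d with 0 => S1 p q x | 1 => S2 p q x | 2 => S3 p q x | _ => S4 p q x end.
Definition rd (R : realType) (p q : R) (d : nat) : R :=
  match d with 0 => p | 1 => q | 2 => p | _ => q end.
Definition td (R : realType) (p q : R) (d : nat) : R :=
  match d with 0 => 0 | 1 => 0 | 2 => 1 - p | _ => 1 - q end.

Lemma SdE (R : realType) (p q : R) d x : Sd p q d x = rd p q d * x + td p q d.
Proof.
case: d => [|[|[|d]]]; rewrite /Sd /rd /td /S1 /S2 /S3 /S4 /=; lra.
Qed.

Lemma rd_bnd (R : realType) (p q : R) d : 0 < p < 1/16 -> 0 < q < 1/16 ->
  0 < rd p q d < 1/16.
Proof. by case: d => [|[|[|d]]]. Qed.

Lemma Sd01 (R : realType) (p q : R) d x : 0 < p < 1/16 -> 0 < q < 1/16 ->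
  0 <= x <= 1 -> 0 <= Sd p q d x <= 1.
Proof.
move=> hp hq hx; rewrite SdE.
case: d => [|[|[|d]]]; rewrite /rd /td /=; nra.
Qed.

Lemma Sd_sub (R : realType) (p q : R) d x y :
  Sd p q d x - Sd p q d y = rd p q d * (x - y).
Proof. rewrite !SdE; ring. Qed.

Lemma Sd_q (R : realType) (p q q' : R) d x : 0 <= x <= 1 ->
  `|Sd p q d x - Sd p q' d x| <= `|q - q'|.
Proof.
move=> hx; rewrite !SdE.
case: d => [|[|[|d]]]; rewrite /rd /td /=.
- by rewrite subrr normr0.
- have -> : q * x + 0 - (q' * x + 0) = (q - q') * x by ring.
  rewrite normrM ler_piMr // ler_norml; case/andP: hx => *; lra.
- rewrite subrr normr0 //.
- have -> : q * x + (1 - q) - (q' * x + (1 - q')) = (q - q') * (x - 1) by ring.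
  rewrite normrM ler_piMr // ler_norml; case/andP: hx => *; lra.
Qed.

Definition Sw (R : realType) (p q : R) (w : seq nat) (x : R) : R := foldr (Sd p q) x w.
Definition rho (R : realType) (p q : R) (w : seq nat) : R := \prod_(d <- w) rd p q d.
Definition digits : seq nat := [:: 0; 1; 2; 3]%N.
Fixpoint words (k : nat) : seq (seq nat) :=
  if k is k'.+1 then [seq d :: w | d <- digits, w <- words k'] else [:: [::]].

Lemma Sw_sub (R : realType) (p q : R) w x y :
  Sw p q w x - Sw p q w y = rho p q w * (x - y).
Proof.
elim: w => [|d w IH] /=; first by rewrite /rho big_nil mul1r.
by rewrite Sd_sub IH /rho big_cons mulrA.
Qed.

Lemma Sw01 (R : realType) (p q : R) w x : 0 < p < 1/16 -> 0 < q < 1/16 ->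
  0 <= x <= 1 -> 0 <= Sw p q w x <= 1.
Proof. by move=> hp hq hx; elim: w => [|d w IH] //=; apply: Sd01. Qed.

Lemma rho_ge0 (R : realType) (p q : R) w : 0 < p < 1/16 -> 0 < q < 1/16 ->
  0 <= rho p q w.
Proof.
move=> hp hq; rewrite /rho; elim: w => [|d w IH]; rewrite ?big_nil ?big_cons //.
by apply: mulr_ge0 => //; case/andP: (rd_bnd d hp hq) => /ltW.
Qed.

Lemma rho_mono (R : realType) (p q v : R) w : 0 < p < 1/16 -> 0 < q -> q <= v -> v < 1/16 ->
  rho p q w <= rho p v w.
Proof.
move=> hp hq qv v1.
have hq' : 0 < q < 1/16 by apply/andP; split => //; lra.
have hv' : 0 < v < 1/16 by apply/andP; split => //; lra.
rewrite /rho; elim: w => [|d w IH]; rewrite ?big_nil ?big_cons //.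
apply: ler_pM => //.
- by case/andP: (rd_bnd d hp hq') => /ltW.
- exact: (rho_ge0 w hp hq').
- by case: d => [|[|[|d]]] /=.
Qed.

Lemma Sw_q (R : realType) (p q1 q2 : R) w x : 0 < p < 1/16 -> 0 < q1 < 1/16 ->
  0 < q2 < 1/16 -> 0 <= x <= 1 ->
  `|Sw p q1 w x - Sw p q2 w x| <= 2 * `|q1 - q2|.
Proof.
move=> hp h1 h2 hx; elim: w => [|d w IH] /=.
  by rewrite subrr normr0 mulr_ge0.
have e : Sd p q1 d (Sw p q1 w x) - Sd p q2 d (Sw p q2 w x) =
  (Sd p q1 d (Sw p q1 w x) - Sd p q1 d (Sw p q2 w x)) +
  (Sd p q1 d (Sw p q2 w x) - Sd p q2 d (Sw p q2 w x)) by ring.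
rewrite e; apply: (le_trans (ler_normD _ _)).
rewrite Sd_sub normrM.
have := @Sd_q R p q1 q2 d _ (Sw01 w hp h2 hx).
have := Sw01 w hp h2 hx.
case/andP: (rd_bnd d hp h1) => r0 r1.
rewrite (ger0_norm (ltW r0)).
have := normr_ge0 (q1 - q2).
have := normr_ge0 (Sw p q1 w x - Sw p q2 w x).
move=> *; nra.
Qed.

Lemma sum_words (R : realType) (f : nat -> R) k :
  \sum_(w <- words k) \prod_(d <- w) f d = (\sum_(d <- digits) f d) ^+ k.
Proof.
elim: k => [|k IH] /=; first by rewrite big_seq1 big_nil expr0.
rewrite exprSr -IH !big_cat big_nil !big_map /digits !big_cons big_nil.
rewrite mulrC !mulrDl mul0r !addr0 !big_distrr /=.
rewrite addr0; by congr (_ + (_ + (_ + _))); apply: eq_bigr => w _; rewrite big_cons.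
Qed.

Lemma Sw_head (R : realType) (p q : R) d w : 0 < p < 1/16 -> 0 < q < 1/16 ->
  (d = 2 \/ d = 3)%N -> 15/16 <= Sw p q (d :: w) 0.
Proof.
move=> hp hq hd /=.
have := Sw01 w hp hq (x:=0); rewrite lexx ler01 => /(_ isT) /andP[y0 y1].
rewrite SdE; case: hd => ->; rewrite /rd /td /=; nra.
Qed.

Lemma words_cons k d w : (d < 4)%N -> w \in words k -> d :: w \in words k.+1.
Proof.
move=> hd hw; case: d hd => [|[|[|[|d]]]] // _;
  by rewrite /= !mem_cat map_f ?orbT.
Qed.

Lemma Sd_cont (R : realType) (p q : R) d : continuous (Sd p q d).
Proof.
rewrite (_ : Sd p q d = fun y => rd p q d * y + td p q d); last first.
  by apply: funext => y; rewrite SdE.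
move=> x; apply: continuousD; last exact: cst_continuous.
apply: (@continuousM _ _ (fun _ => rd p q d) id); first exact: cst_continuous.
exact: cvg_id.
Qed.

Lemma union4 (R : realType) (p q : R) (A : set R) x :
  ((S1 p q @` A) `|` (S2 p q @` A) `|` (S3 p q @` A) `|` (S4 p q @` A)) x <->
  exists d y, (d < 4)%N /\ A y /\ x = Sd p q d y.
Proof.
split.
  case=> [[[[y Ay <-]|[y Ay <-]]|[y Ay <-]]|[y Ay <-]].
  - by exists 0%N, y.
  - by exists 1%N, y.
  - by exists 2%N, y.
  - by exists 3%N, y.
move=> [d [y [hd [Ay ->]]]].
case: d hd => [|[|[|[|d]]]] // _.
- by left; left; left; exists y.
- by left; left; right; exists y.
- by left; right; exists y.
- by right; exists y.
Qed.

Lemma attr_inv (R : realType) (p q : R) K x : is_attractor p q K -> K x ->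
  exists d y, (d < 4)%N /\ K y /\ x = Sd p q d y.
Proof. by move=> [_ [_ E]]; rewrite {1}E => /union4. Qed.

Lemma attr_img (R : realType) (p q : R) K d y : is_attractor p q K -> K y ->
  K (Sd p q d y).
Proof.
move=> [_ [_ E]] Ky; rewrite E; apply/union4.
case: d => [|[|[|d]]]; [exists 0%N, y|exists 1%N, y|exists 2%N, y|exists 3%N, y] => //.
Qed.

Lemma attr_01 (R : realType) (p q : R) K x : 0 < p < 1/16 -> 0 < q < 1/16 ->
  is_attractor p q K -> K x -> 0 <= x <= 1.
Proof.
move=> hp hq hA Kx.
have [K0 [cK E]] := hA.
have hs := compact_has_sup K0 cK.
have [M [_ MA]] := compact_bounded cK.
have KB : forall y, K y -> `|y| <= M + 1.
  by move=> y Ky; apply: (MA (M + 1)) => //; rewrite ltrDl.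
apply/andP; split; last first.
  have s1 : sup K <= 1.
    rewrite leNgt; apply/negP => s1.
    have : sup K <= 1 + (sup K - 1) / 2.
      apply: ge_sup => // z Kz.
      have [d [y [_ [Ky ->]]]] := attr_inv hA Kz.
      have ys := sup_upper_bound hs Ky.
      move: ys; rewrite SdE; case/andP: hp => *; case/andP: hq => *.
      by case: d => [|[|[|d]]]; rewrite /rd /td /=; nra.
    lra.
  exact: le_trans (sup_upper_bound hs Kx) s1.
pose N := [set - y | y in K].
have hN : has_sup N.
  split; first by exists (- x), x.
  exists (M + 1) => z [y Ky <-].
  by apply: le_trans (KB y Ky); rewrite -normrN ler_norm.
have s0 : sup N <= 0.
  rewrite leNgt; apply/negP => s0.
  have : sup N <= sup N / 2.
    apply: ge_sup => //; first by exists (- x), x.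
    move=> z [y' Ky' <-].
    have [d [y [_ [Ky ->]]]] := attr_inv hA Ky'.
    have ys : - y <= sup N by apply: sup_upper_bound => //; exists y.
    move: ys; rewrite SdE; case/andP: hp => *; case/andP: hq => *.
    by case: d => [|[|[|d]]]; rewrite /rd /td /=; nra.
  lra.
have : - x <= sup N by apply: sup_upper_bound => //; exists x.
lra.
Qed.

Fixpoint Fk (R : realType) (p q : R) (k : nat) : set R :=
  if k is k'.+1 then
    (S1 p q @` Fk p q k') `|` (S2 p q @` Fk p q k') `|` (S3 p q @` Fk p q k')
      `|` (S4 p q @` Fk p q k')
  else [set x | 0 <= x <= 1].

Lemma Fdec1 (R : realType) (p q : R) k : 0 < p < 1/16 -> 0 < q < 1/16 ->
  Fk p q k.+1 `<=` Fk p q k.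
Proof.
move=> hp hq; elim: k => [|k IH] x.
  by move=> /union4 [d [y [_ [hy ->]]]]; apply: Sd01.
move=> /union4 [d [y [hd [hy ->]]]]; apply/union4.
by exists d, y; split => //; split => //; apply: IH.
Qed.

Lemma Fdec (R : realType) (p q : R) j k : 0 < p < 1/16 -> 0 < q < 1/16 ->
  (j <= k)%N -> Fk p q k `<=` Fk p q j.
Proof.
move=> hp hq; elim: k => [|k IH].
  by rewrite leqn0 => /eqP ->.
rewrite leq_eqVlt => /orP [/eqP -> //| hjk].
by move=> x /(Fdec1 hp hq) /IH; apply.
Qed.

Lemma F0 (R : realType) (p q : R) k : Fk p q k 0.
Proof.
elim: k => [|k IH] /=; first by rewrite lexx ler01.
by left; left; left; exists 0 => //; rewrite /S1 mulr0.
Qed.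

Lemma Fcompact (R : realType) (p q : R) k : compact (Fk p q k).
Proof.
elim: k => [|k IH] /=.
  rewrite (_ : [set x : R | 0 <= x <= 1] = `[0, 1]%classic); first exact: segment_compact.
  by apply/seteqP; split => x /=; rewrite in_itv.
have hc : forall d, compact (Sd p q d @` Fk p q k).
  move=> d; apply: continuous_compact => //.
  by apply: continuous_subspaceT; exact: Sd_cont.
apply: compactU; [apply: compactU; [apply: compactU|]|]; [exact: (hc 0%N)|exact: (hc 1%N)|exact: (hc 2%N)|exact: (hc 3%N)].
Qed.

Lemma attr_ex (R : realType) (p q : R) : 0 < p < 1/16 -> 0 < q < 1/16 ->
  exists K, is_attractor p q K.
Proof.
move=> hp hq.
pose K := \bigcap_(k in setT) Fk p q k.
have cK : closed K.
  apply: closed_bigI => k _; apply: compact_closed; first exact: Rhausdorff.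
  exact: Fcompact.
exists K; split; first by exists 0 => k _; exact: F0.
split.
  apply: (subclosed_compact cK (@Fcompact R p q 0)).
  by move=> x Kx; apply: Kx.
apply/seteqP; split => x; last first.
  move=> /union4 [d [y [hd [Ky ->]]]] k _.
  case: k => [|k].
    by apply: Sd01 => //; apply: (Ky 0%N).
  by apply/union4; exists d, y; split => //; split => //; apply: Ky.
move=> Kx; apply/union4.
apply: contrapT => hno.
have hpre : forall d, (d < 4)%N -> exists k, ~ Fk p q k ((x - td p q d) / rd p q d).
  move=> d hd; apply/existsNP => hall; apply: hno.
  exists d, ((x - td p q d) / rd p q d); split => //; split => //.
  rewrite SdE mulrCA divff ?mulr1 ?subrK //.
  by case/andP: (rd_bnd d hp hq) => /gt_eqF ->.
have [k0 h0] := hpre 0%N isT.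
have [k1 h1] := hpre 1%N isT.
have [k2 h2] := hpre 2%N isT.
have [k3 h3] := hpre 3%N isT.
have := Kx (k0 + k1 + k2 + k3).+1 I.
move=> /union4 [d [y [hd [Fy xe]]]].
have ye : y = (x - td p q d) / rd p q d.
  rewrite xe SdE addrK mulrAC divff ?mul1r //.
  by case/andP: (rd_bnd d hp hq) => /gt_eqF ->.
rewrite ye in Fy.
clear xe; case: d hd ye Fy => [|[|[|[|d]]]] // _ _ Fy.
- by apply: h0; apply: Fdec Fy => //; rewrite -!addnA leq_addr.
- by apply: h1; apply: Fdec Fy => //; lia.
- by apply: h2; apply: Fdec Fy => //; lia.
- by apply: h3; apply: Fdec Fy => //; lia.
Qed.

Lemma Kpq_attr (R : realType) (p q : R) : 0 < p < 1/16 -> 0 < q < 1/16 ->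
  is_attractor p q (Kpq p q).
Proof. by move=> hp hq; apply: xgetPex; apply: attr_ex. Qed.
Lemma fcont (R : realType) (a b : R) : continuous (fun z : R * R => a * z.1 - b * z.2).
Proof.
move=> z; apply: cvgB.
  apply: cvgMr. 
  exact: cvg_fst.
apply: cvgMr.
exact: cvg_snd.
Qed.
Lemma geo_small (R : realType) (c e : R) : 0 <= c < 1 -> 0 < e -> exists k, c ^+ k < e.
Proof.
move=> /andP[c0 c1] e0.
have h := @cvg_expr R c.
have : `|c| < 1 by rewrite ger0_norm.
move/h => /cvgrPdist_lt /(_ e e0) [N _ HN].
exists N; have := HN N (leqnn N); rewrite sub0r normrN ger0_norm //.
exact: exprn_ge0.
Qed.

Lemma iterS1 (R : realType) (p q : R) m x : iter m (S1 p q) x = p ^+ m * x.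
Proof. by elim: m => [|m IH] /=; rewrite ?expr0 ?mul1r // IH /S1 exprS mulrA. Qed.

Lemma iterS2 (R : realType) (p q : R) m x : iter m (S2 p q) x = q ^+ m * x.
Proof. by elim: m => [|m IH] /=; rewrite ?expr0 ?mul1r // IH /S2 exprS mulrA. Qed.

Lemma DeltaP (R : realType) m n (p q : R) : Delta m n p q <->
  (0 < q < 1/16 /\ exists a b, Apq p q a /\ Apq p q b /\ p ^+ m * a = q ^+ n * b).
Proof.
split.
  move=> [hq [z [[a Aa ea] [b Ab eb]]]]; split => //; exists a, b; split => //; split => //.
  by rewrite -(@iterS1 R p q) -(@iterS2 R p q) ea eb.
move=> [hq [a [b [Aa [Ab e]]]]]; split => //.
exists (p ^+ m * a); split; first by exists a => //; rewrite iterS1.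
by exists b => //; rewrite iterS2 e.
Qed.

Lemma ApqP (R : realType) (p q : R) a : Apq p q a ->
  exists d y, (d = 2 \/ d = 3)%N /\ Kpq p q y /\ a = Sd p q d y.
Proof.
case=> [[y Ky <-]|[y Ky <-]]; [exists 2%N, y|exists 3%N, y]; split => //; by [left|right].
Qed.

Lemma ApqI (R : realType) (p q : R) d y : (d = 2 \/ d = 3)%N -> Kpq p q y ->
  Apq p q (Sd p q d y).
Proof. by case=> ->; [left|right]; exists y. Qed.

Lemma Apq_bnd (R : realType) (p q : R) a : 0 < p < 1/16 -> 0 < q < 1/16 ->
  Apq p q a -> 15/16 <= a <= 1.
Proof.
move=> hp hq /ApqP [d [y [hd [Ky ->]]]].
have /andP[y0 y1] := attr_01 hp hq (Kpq_attr hp hq) Ky.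
rewrite SdE; case/andP: hp => *; case/andP: hq => *.
by case: hd => ->; rewrite /rd /td /=; apply/andP; split; nra.
Qed.

Lemma approxK (R : realType) (p q q' : R) k x : 0 < p < 1/16 -> 0 < q < 1/16 ->
  0 < q' < 1/16 -> Kpq p q x ->
  exists x', Kpq p q' x' /\ `|x - x'| <= (1/16) ^+ k + 2 * `|q - q'|.
Proof.
move=> hp hq hq'.
have hA := Kpq_attr hp hq; have hA' := Kpq_attr hp hq'.
elim: k x => [|k IH] x Kx.
  have [[x' Kx'] _] := hA'.
  exists x'; split => //.
  have := attr_01 hp hq hA Kx; have := attr_01 hp hq' hA' Kx'.
  rewrite expr0 => /andP[? ?] /andP[? ?].
  have := normr_ge0 (q - q').
  rewrite ler_norml; move=> *; apply/andP; split; lra.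
have [d [y [_ [Ky ->]]]] := attr_inv hA Kx.
have [y' [Ky' hy]] := IH y Ky.
exists (Sd p q' d y'); split; first exact: attr_img.
have e : Sd p q d y - Sd p q' d y' =
  (Sd p q d y - Sd p q d y') + (Sd p q d y' - Sd p q' d y') by ring.
rewrite e; apply: (le_trans (ler_normD _ _)).
rewrite Sd_sub normrM.
have := @Sd_q R p q q' d _ (attr_01 hp hq' hA' Ky').
case/andP: (rd_bnd d hp hq) => r0 r1.
rewrite (ger0_norm (ltW r0)) exprSr.
have := normr_ge0 (q - q').
have h16 : (0 : R) <= 1/16 by lra.
have := exprn_ge0 k h16.
move=> *; nra.
Qed.

Lemma approxA (R : realType) (p q q' : R) k a : 0 < p < 1/16 -> 0 < q < 1/16 ->
  0 < q' < 1/16 -> Apq p q a ->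
  exists a', Apq p q' a' /\ `|a - a'| <= (1/16) ^+ k + 2 * `|q - q'|.
Proof.
move=> hp hq hq' /ApqP [d [y [hd [Ky ->]]]].
have hA' := Kpq_attr hp hq'.
have [y' [Ky' hy]] := approxK k hp hq hq' Ky.
exists (Sd p q' d y'); split; first exact: ApqI.
have e : Sd p q d y - Sd p q' d y' =
  (Sd p q d y - Sd p q d y') + (Sd p q d y' - Sd p q' d y') by ring.
rewrite e; apply: (le_trans (ler_normD _ _)).
rewrite Sd_sub normrM.
have := @Sd_q R p q q' d _ (attr_01 hp hq' hA' Ky').
case/andP: (rd_bnd d hp hq) => r0 r1.
rewrite (ger0_norm (ltW r0)).
have := normr_ge0 (q - q').
have h16 : (0 : R) <= 1/16 by lra.
have := exprn_ge0 k h16.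
have := normr_ge0 (y - y').
move=> *; nra.
Qed.

Lemma powlip (R : realType) (a b : R) n : 0 <= a <= 1 -> 0 <= b <= 1 ->
  `|a ^+ n - b ^+ n| <= n%:R * `|a - b|.
Proof.
move=> /andP[a0 a1] /andP[b0 b1]; elim: n => [|n IH].
  by rewrite !expr0 subrr normr0 mul0r.
have e : a ^+ n.+1 - b ^+ n.+1 = a * (a ^+ n - b ^+ n) + b ^+ n * (a - b)
  by rewrite !exprS; ring.
rewrite e; apply: (le_trans (ler_normD _ _)).
rewrite !normrM (ger0_norm a0) (ger0_norm (exprn_ge0 n b0)) -nat1r mulrDl mul1r.
have := exprn_ile1 n b0 b1; have := exprn_ge0 n b0.
have := normr_ge0 (a ^+ n - b ^+ n); have := normr_ge0 (a - b).
move=> *; nra.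
Qed.

Lemma Delta_closed (R : realType) m n (p q0 : R) : 0 < p < 1/16 -> 0 < q0 < 1/16 ->
  closure (Delta m n p) q0 -> Delta m n p q0.
Proof.
move=> hp hq0 hcl.
have hA0 := Kpq_attr hp hq0.
have cA0 : compact (Apq p q0).
  have [_ [cK _]] := hA0.
  apply: compactU; apply: continuous_compact => //; apply: continuous_subspaceT.
    exact: (@Sd_cont R p q0 2).
  exact: (@Sd_cont R p q0 3).
pose f := fun z : R * R => p ^+ m * z.1 - q0 ^+ n * z.2.
pose D := f @` (Apq p q0 `*` Apq p q0).
have cD : compact D.
  apply: continuous_compact; last exact: compact_setX.
  by apply: continuous_subspaceT; apply: fcont.
have : D 0.
  apply: (compact_closed (@Rhausdorff R) cD).
  move=> B /nbhs_ballP [e /= e0 BE].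
  have [k hk] : exists k, (1/16 : R) ^+ k < e / 4.
    apply: geo_small; lra.
  have n0 : (0:R) <= n%:R := ler0n R n.
  have d0 : 0 < e / (2 * (n%:R + 4)) by apply: divr_gt0 => //; lra.
  have [q [Dq bq]] := hcl _ (nbhsx_ballx q0 _ d0).
  move: bq; rewrite /ball /= => bq.
  have [hq [a [b [Aa [Ab eab]]]]] := (DeltaP m n p q).1 Dq.
  have [a' [Aa' ha]] := approxA k hp hq hq0 Aa.
  have [b' [Ab' hb]] := approxA k hp hq hq0 Ab.
  exists (f (a', b')); split; first by exists (a', b').
  apply: BE; rewrite /ball /= sub0r normrN /f /=.
  have e1 : p ^+ m * a' - q0 ^+ n * b' =
    p ^+ m * (a' - a) + (q ^+ n - q0 ^+ n) * b + q0 ^+ n * (b - b').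
    by rewrite mulrBr eab; ring.
  rewrite e1.
  have hpm : 0 <= p ^+ m <= 1.
    by case/andP: hp => *; rewrite exprn_ge0 ?exprn_ile1 //=; lra.
  have hqn : 0 <= q0 ^+ n <= 1.
    by case/andP: hq0 => *; rewrite exprn_ge0 ?exprn_ile1 //=; lra.
  have /andP[b15 b1] := Apq_bnd hp hq Ab.
  have hpow := @powlip R q q0 n.
  have hq01 : 0 <= q <= 1 by case/andP: hq => *; apply/andP; split; lra.
  have hq001 : 0 <= q0 <= 1 by case/andP: hq0 => *; apply/andP; split; lra.
  move: (hpow hq01 hq001) => hpw.
  have t1 : `|p ^+ m * (a' - a)| <= `|a - a'|.
    rewrite normrM distrC; case/andP: hpm => *.
    by rewrite ger0_norm // ler_piMl.
  have t2 : `|(q ^+ n - q0 ^+ n) * b| <= n%:R * `|q - q0|.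
    rewrite normrM (ger0_norm (_ : 0 <= b)); last lra.
    apply: le_trans hpw; rewrite ler_piMr //.
  have t3 : `|q0 ^+ n * (b - b')| <= `|b - b'|.
    rewrite normrM; case/andP: hqn => *.
    by rewrite ger0_norm // ler_piMl.
  have hqq : `|q - q0| < e / (2 * (n%:R + 4)) by rewrite distrC.

  have hqq2 : (n%:R + 4) * `|q - q0| <= e / 2.
    have -> : e / 2 = (n%:R + 4) * (e / (2 * (n%:R + 4))).
      by field; rewrite gt_eqF //; lra.
    by apply: ler_wpM2l; [lra| exact: ltW].
  have := ler_normD (p ^+ m * (a' - a) + (q ^+ n - q0 ^+ n) * b) (q0 ^+ n * (b - b')).
  have := ler_normD (p ^+ m * (a' - a)) ((q ^+ n - q0 ^+ n) * b).
  have := normr_ge0 (q - q0).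
  move=> *; nra.
move=> [[a b] [/= Aa Ab]]; rewrite /f /= => /eqP; rewrite subr_eq0 => /eqP e.
by apply/DeltaP; split => //; exists a, b.
Qed.

Lemma word_dec (R : realType) (p q : R) k x : is_attractor p q (Kpq p q) ->
  Kpq p q x -> exists w z, w \in words k /\ Kpq p q z /\ x = Sw p q w z.
Proof.
move=> hA; elim: k x => [|k IH] x Kx.
  by exists [::], x; split => //; rewrite inE.
have [d [y [hd [Ky ->]]]] := attr_inv hA Kx.
have [w [z [hw [Kz ->]]]] := IH y Ky.
exists (d :: w), z; split; first exact: words_cons.
by split.
Qed.

Lemma transv (R : realType) m n (p q1 q2 : R) w1 w2 : 0 < p < 1/16 ->
  0 < q1 < 1/16 -> 0 < q2 < 1/16 -> q1 <= q2 -> (0 < n)%N ->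
  15/16 * p ^+ m <= q1 ^+ n ->
  (exists d w, w2 = d :: w /\ (d = 2 \/ d = 3)%N) ->
  p ^+ m * (q2 - q1) <=
    (q2 ^+ n * Sw p q2 w2 0 - p ^+ m * Sw p q2 w1 0)
    - (q1 ^+ n * Sw p q1 w2 0 - p ^+ m * Sw p q1 w1 0).
Proof.
move=> hp h1 h2 q12 n0 hY [d [w [-> hd]]].
have x01 : (0 : R) <= (0 : R) <= 1 by rewrite lexx ler01.
have hb2 := Sw_head w hp h2 hd.
have /andP[_ hb21] := Sw01 (d :: w) hp h2 x01.
have hb := Sw_q (d :: w) hp h2 h1 x01.
have ha := Sw_q w1 hp h2 h1 x01.
set b2 := Sw p q2 (d :: w) 0 in hb2 hb21 hb *.
set b1 := Sw p q1 (d :: w) 0 in hb *.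
set a2 := Sw p q2 w1 0 in ha *.
set a1 := Sw p q1 w1 0 in ha *.
set P := p ^+ m in hY *.
have P0 : 0 < P by rewrite /P exprn_gt0 //; case/andP: hp.
case: n n0 hY => // n' _ hY.
set X := q1 ^+ n'.
have hYX : q1 ^+ n'.+1 = q1 * X by rewrite exprS.
rewrite hYX in hY *.
set dq := q2 - q1.
have dq0 : 0 <= dq by rewrite /dq subr_ge0.
have q1ge : 0 <= q1 by case/andP: h1 => /ltW.
have X0 : 0 <= X by rewrite /X exprn_ge0.
have hZ : q2 * X <= q2 ^+ n'.+1.
  rewrite exprS ler_wpM2l //; first by case/andP: h2 => /ltW.
  by apply: lerXn2r => //; rewrite nnegrE //; case/andP: h2 => /ltW.
have hdq : `|q2 - q1| = dq by rewrite ger0_norm.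
rewrite hdq in hb ha.
move: hb ha; rewrite !ler_norml => /andP[hb _] /andP[_ ha].
have s1 : (q2 ^+ n'.+1 - q1 * X) * b2 >= dq * X * (15/16).
  have : q2 ^+ n'.+1 - q1 * X >= dq * X by rewrite /dq; nra.
  have : dq * X >= 0 by apply: mulr_ge0.
  nra.
have s2 : q1 * X * (b2 - b1) >= - 2 * (q1 * X) * dq.
  have : q1 * X >= 0 by apply: mulr_ge0.
  nra.
have s3 : P * (a2 - a1) <= 2 * P * dq by nra.
have s4 : q1 * X <= X / 16 by case/andP: h1 => *; nra.
have s5 : 15 * P <= X.
  case/andP: h1 => *; nra.
have s6 : dq * (q1 * X) <= dq * X / 16 by nra.
have s7 : dq * P * 15 <= dq * X by nra.
have e : q2 ^+ n'.+1 * b2 - P * a2 - (q1 * X * b1 - P * a1) =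
  (q2 ^+ n'.+1 - q1 * X) * b2 + q1 * X * (b2 - b1) - P * (a2 - a1) by ring.
rewrite e.
nra.
Qed.

Lemma cover_len (R : realType) (I : eqType) (E : I -> set R) (dd : I -> R) (s : seq I) u v :
  (forall i, 0 <= dd i) -> (forall i x y, E i x -> E i y -> `|x - y| <= dd i) ->
  u <= v -> (forall x, u <= x <= v -> exists2 i, i \in s & E i x) ->
  v - u <= \sum_(i <- s) dd i.
Proof.
move=> d0 dE.
move: {2}(size s) (leqnn (size s)) => N.
elim: N s u => [|N IH] s u hs huv hcov.
  have [i si _] := hcov u (ltac:(by rewrite lexx huv)).
  by move: hs si; rewrite leqn0 => /nilP ->.
have [i0 i0s Eu] := hcov u (ltac:(by rewrite lexx huv)).
rewrite (big_rem i0 i0s) /=.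
have srem : 0 <= \sum_(y <- rem i0 s) dd y by apply: sumr_ge0.
have [hv|hv] := leP v (u + dd i0).
  lra.
suff : v - (u + dd i0) <= \sum_(y <- rem i0 s) dd y by lra.
apply/ler_addgt0Pr => eps eps0.
have [hv2|hv2] := leP (u + dd i0 + eps) v; last first.
  lra.
have : v - (u + dd i0 + eps) <= \sum_(y <- rem i0 s) dd y.
  apply: IH => //.
    by rewrite size_rem //; move: hs; case: (size s).
  move=> x /andP[x1 x2].
  have di0 := d0 i0.
  have [j js Ex] := hcov x (ltac:(apply/andP; split => //; lra)).
  exists j => //; apply: rem_mem => //.
  apply/eqP => ji0; rewrite ji0 in Ex.
  have := dE i0 x u Ex Eu.
  rewrite ger0_norm; lra.
lra.
Qed.

Lemma qn_lb (R : realType) m n (p q : R) : 0 < p < 1/16 -> Delta m n p q ->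
  15/16 * p ^+ m <= q ^+ n.
Proof.
move=> hp /DeltaP [hq [a [b [Aa [Ab e]]]]].
have /andP[a15 a1] := Apq_bnd hp hq Aa.
have /andP[b15 b1] := Apq_bnd hp hq Ab.
have P0 : 0 <= p ^+ m by apply: exprn_ge0; case/andP: hp => /ltW.
have Q0 : 0 <= q ^+ n by apply: exprn_ge0; case/andP: hq => /ltW.
nra.
Qed.

Lemma sum_const_words (R : realType) k :
  \sum_(w <- words k) (1 : R) = 4 ^+ k.
Proof.
rewrite (eq_bigr (fun w => \prod_(d <- w) (1 : R))); last first.
  by move=> w _; rewrite big1_eq.
rewrite sum_words /digits !big_cons big_nil.
congr (_ ^+ _); lra.
Qed.

Lemma sum_rho_words (R : realType) (p v : R) k :
  \sum_(w <- words k) rho p v w = (2 * p + 2 * v) ^+ k.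
Proof.
rewrite /rho sum_words /digits !big_cons big_nil /rd.
congr (_ ^+ _); lra.
Qed.

Lemma no_interval (R : realType) m n (p u v : R) : 0 < p < 1/16 -> (0 < n)%N -> u < v ->
  (forall q, u <= q <= v -> Delta m n p q) -> False.
Proof.
move=> hp n0 uv hJ.
have huu : u <= u <= v by rewrite lexx; exact: ltW.
have hvv : u <= v <= v by rewrite lexx andbT; exact: ltW.
have [hu _] := (DeltaP m n p u).1 (hJ u huu).
have [hv _] := (DeltaP m n p v).1 (hJ v hvv).
have P0 : 0 < p ^+ m by apply: exprn_gt0; case/andP: hp.
have V0 : 0 <= v ^+ n by apply: exprn_ge0; case/andP: hv => /ltW.
pose c := 8 * p + 8 * v.
have c0 : 0 <= c by rewrite /c; case/andP: hp => *; case/andP: hv => *; lra.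
have c1 : c < 1 by rewrite /c; case/andP: hp => *; case/andP: hv => *; lra.
pose C := 2 + 2 * v ^+ n / p ^+ m.
have C0 : 0 < C.
  by rewrite /C; have := divr_ge0 V0 (ltW P0); lra.
have [k hk] : exists k, c ^+ k < (v - u) / C.
  by apply: geo_small; [apply/andP; split | apply: divr_gt0 => //; lra].
pose W := words k.+1.
pose s := [seq (w1, w2) | w1 <- W, w2 <- W].
pose dd := fun i : seq nat * seq nat =>
  2 * rho p v i.1 + 2 * v ^+ n / p ^+ m * rho p v i.2.
pose eta := fun i : seq nat * seq nat => p ^+ m * rho p v i.1 + v ^+ n * rho p v i.2.
pose G := fun (i : seq nat * seq nat) (q : R) =>
  q ^+ n * Sw p q i.2 0 - p ^+ m * Sw p q i.1 0.
pose E := fun (i : seq nat * seq nat) (q : R) => (u <= q <= v) /\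
  (exists d w, i.2 = d :: w /\ (d = 2 \/ d = 3)%N) /\ `|G i q| <= eta i.
have hv' : 0 < v < 1/16 by [].
have rho0 : forall w, 0 <= rho p v w by move=> w; apply: rho_ge0.
have dd0 : forall i, 0 <= dd i.
  move=> i; rewrite /dd; have := rho0 i.1; have := rho0 i.2.
  have := divr_ge0 V0 (ltW P0).
  move=> *; apply: addr_ge0; apply: mulr_ge0 => //; lra.
have key : forall i q1 q2, E i q1 -> E i q2 -> q1 <= q2 -> q2 - q1 <= dd i.
  move=> i q1 q2 [h1 [hh e1]] [h2 [_ e2]] q12.
  have Dq1 := hJ q1 h1.
  have [hq1 _] := (DeltaP m n p q1).1 Dq1.
  have [hq2 _] := (DeltaP m n p q2).1 (hJ q2 h2).
  have T := transv i.1 hp hq1 hq2 q12 n0 (qn_lb hp Dq1) hh.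
  have eqdd : dd i = 2 * eta i / p ^+ m.
    by rewrite /dd /eta; field; apply: lt0r_neq0.
  rewrite eqdd ler_pdivlMr // mulrC.
  move: e1 e2; rewrite !ler_norml => /andP[e1 e1'] /andP[e2 e2'].
  rewrite /G in e1 e1' e2 e2'.
  lra.
have diam : forall i x y, E i x -> E i y -> `|x - y| <= dd i.
  move=> i x y Ex Ey; have [xy|yx] := leP x y.
    by rewrite distrC ger0_norm ?subr_ge0 //; apply: key.
  by rewrite ger0_norm ?subr_ge0 ?(ltW yx) //; apply: key => //; apply: ltW.
have cov : forall x, u <= x <= v -> exists2 i, i \in s & E i x.
  move=> x hx.
  have [hxq [a [b [Aa [Ab eab]]]]] := (DeltaP m n p x).1 (hJ x hx).
  have hAx := Kpq_attr hp hxq.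
  have [d1 [y1 [hd1 [Ky1 ea]]]] := ApqP Aa.
  have [d2 [y2 [hd2 [Ky2 eb]]]] := ApqP Ab.
  have [w1 [z1 [hw1 [Kz1 ey1]]]] := word_dec k hAx Ky1.
  have [w2 [z2 [hw2 [Kz2 ey2]]]] := word_dec k hAx Ky2.
  have d1l : (d1 < 4)%N by case: hd1 => ->.
  have d2l : (d2 < 4)%N by case: hd2 => ->.
  exists (d1 :: w1, d2 :: w2).
    by apply: allpairs_f; apply: words_cons.
  split => //; split; first by exists d2, w2.
  have ea' : a = Sw p x (d1 :: w1) z1 by rewrite ea ey1.
  have eb' : b = Sw p x (d2 :: w2) z2 by rewrite eb ey2.
  have hz1 := attr_01 hp hxq hAx Kz1.
  have hz2 := attr_01 hp hxq hAx Kz2.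
  have ra := @Sw_sub R p x (d1 :: w1) z1 0.
  have rb := @Sw_sub R p x (d2 :: w2) z2 0.
  have x0 : 0 < x by case/andP: hxq.
  have xv : x <= v by case/andP: hx.
  have rma := rho_mono (d1 :: w1) hp x0 xv (ltac:(by case/andP: hv)).
  have rmb := rho_mono (d2 :: w2) hp x0 xv (ltac:(by case/andP: hv)).
  have r0a := rho_ge0 (d1 :: w1) hp hxq.
  have r0b := rho_ge0 (d2 :: w2) hp hxq.
  have Xn0 : 0 <= x ^+ n by apply: exprn_ge0; apply: ltW.
  have v0 : 0 <= v by case/andP: hv => /ltW.
  have XnV : x ^+ n <= v ^+ n by apply: lerXn2r; rewrite ?nnegrE ?(ltW x0).
  rewrite /G /eta /=.
  set A1 := Sw p x (d1 :: w1) 0 in ra *.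
  set B1 := Sw p x (d2 :: w2) 0 in rb *.
  rewrite -ea' in ra; rewrite -eb' in rb.
  have e : x ^+ n * B1 - p ^+ m * A1 = x ^+ n * (B1 - b) + p ^+ m * (a - A1).
    by rewrite mulrBr mulrBr eab; ring.
  rewrite e ler_norml; move: hz1 hz2 => /andP[z10 z11] /andP[z20 z21].
  rewrite subr0 in ra; rewrite subr0 in rb.
  have f1 : 0 <= a - A1 <= rho p v (d1 :: w1).
    rewrite ra; apply/andP; split; first exact: mulr_ge0.
    apply: le_trans rma; rewrite -[X in _ <= X]mulr1; exact: ler_wpM2l.
  have f2 : 0 <= b - B1 <= rho p v (d2 :: w2).
    rewrite rb; apply/andP; split; first exact: mulr_ge0.
    apply: le_trans rmb; rewrite -[X in _ <= X]mulr1; exact: ler_wpM2l.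
  move: f1 f2 => /andP[f1 f1'] /andP[f2 f2'].
  have g1 : 0 <= p ^+ m * (a - A1) <= p ^+ m * rho p v (d1 :: w1).
    by rewrite mulr_ge0 ?ler_wpM2l // ltW.
  have g2 : 0 <= x ^+ n * (b - B1) <= v ^+ n * rho p v (d2 :: w2).
    rewrite mulr_ge0 //=; apply: le_trans (ler_wpM2l Xn0 f2') _.
    by apply: ler_wpM2r => //; apply: rho0.
  move: g1 g2 => /andP[g1 g1'] /andP[g2 g2'].
  have e2 : x ^+ n * (B1 - b) = - (x ^+ n * (b - B1)) by ring.
  rewrite e2; apply/andP; split; lra.
have := cover_len dd0 diam (ltW uv) cov.
have hsum : \sum_(i <- s) dd i = C * c ^+ k.+1.
  rewrite /s big_allpairs /=.
  pose N := \sum_(w <- W) (1 : R).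
  pose T := \sum_(w <- W) rho p v w.
  transitivity (\sum_(w1 <- W) (2 * rho p v w1 * N + 2 * v ^+ n / p ^+ m * T)).
    apply: eq_bigr => w1 _; rewrite big_split /=; congr (_ + _).
      by rewrite /N [RHS]big_distrr /=; apply: eq_bigr => ? _; rewrite mulr1.
    by rewrite /T big_distrr.
  have s1 : \sum_(w1 <- W) 2 * rho p v w1 * N = 2 * T * N.
    by rewrite -big_distrl -big_distrr.
  have s2 : \sum_(w1 <- W) 2 * v ^+ n / p ^+ m * T = 2 * v ^+ n / p ^+ m * T * N.
    by rewrite /N [RHS]big_distrr /=; apply: eq_bigr => ? _; rewrite mulr1.
  rewrite big_split /= s1 s2.
  rewrite /N /T /W sum_const_words sum_rho_words /C /c.
  have -> : 8 * p + 8 * v = 4 * (2 * p + 2 * v) by ring.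
  rewrite exprMn; ring.
rewrite hsum => hle.
have : c ^+ k.+1 <= c ^+ k.
  rewrite exprSr -[X in _ <= X]mulr1; apply: ler_wpM2l; [exact: exprn_ge0|exact: ltW].
move: hk; rewrite ltr_pdivlMr // => hk hck.
have : C * c ^+ k.+1 <= C * c ^+ k by apply: ler_wpM2l => //; exact: ltW.
lra.
Qed.

Lemma closure_bnd (R : realType) m n (p y : R) :
  closure (Delta m n p) y -> 0 <= y <= 1/16.
Proof.
move=> hcl; apply/andP; split; rewrite leNgt; apply/negP => hy.
  have e0 : 0 < - y by lra.
  have [q [[hq _] bq]] := hcl _ (nbhsx_ballx y _ e0).
  move: bq; rewrite /ball /= ltr_norml; case/andP: hq => *; lra.
have e0 : 0 < y - 1/16 by lra.
have [q [[hq _] bq]] := hcl _ (nbhsx_ballx y _ e0).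
move: bq; rewrite /ball /= ltr_norml; case/andP: hq => *; lra.
Qed.

Unset Implicit Arguments.

Theorem theorem17 (R : realType) (p : R) (hp : 0 < p < 1/16) (m n : nat)
  (hm : (0 < m)%N) (hn : (0 < n)%N) :
  (* closed in the subspace (0,1/16) *)
  closure (Delta m n p) `&` [set q : R | 0 < q < 1/16] = Delta m n p /\
  (* nowhere dense (in the open set (0,1/16), equivalently in R) *)
  interior (closure (Delta m n p)) = set0.
Proof.
split.
  apply/seteqP; split.
    by move=> q [cq hq]; exact: Delta_closed hp hq cq.
  move=> q Dq; split; first exact: subset_closure.
  by case: Dq.
apply/seteqP; split => // x hx.
have [e /= e0 be] := (nbhs_ballP x _).1 hx.
have inb : forall q, `|x - q| < e -> closure (Delta m n p) q.
  by move=> q hq; apply: be; rewrite /ball /=.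
have h1 := closure_bnd (inb (x - 3 * e / 4) ltac:(rewrite opprB addrC subrK ger0_norm; lra)).
have h2 := closure_bnd (inb (x + 3 * e / 4) ltac:(rewrite opprD addrA subrr add0r normrN ger0_norm; lra)).
apply: (@no_interval R m n p (x - e / 2) (x + e / 2) hp hn); first lra.
move=> q /andP[q1 q2].
have hq : 0 < q < 1/16 by apply/andP; split; lra.
apply: Delta_closed hp hq _.
apply: inb; rewrite ltr_norml; apply/andP; split; lra.
Qed.
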